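(* Let $G$ be a graph and $t$ a positive integer. If $\varphi(G)\ge t$, then $G$ contains an induced subgraph which is a minimal b-$t$-atom.
   Context: A proper $k$-coloring of $G$ is a surjective map $c:V(G)\to\{1,\ldots,k\}$ with $c(u)\ne c(v)$ for every edge $uv$. In a proper $k$-coloring, a vertex of color $i$ is a b-vertex if it has a neighbor of every color $j\in\{1,\ldots,k\}\setminus\{i\}$. A b-$k$-coloring is a proper $k$-coloring in which every color class contains a b-vertex; the b-chromatic number $\varphi(G)$ is the largest $k$ such that $G$ has a b-$k$-coloring. A b-$t$-atom is a graph $A$ whose vertex set can be partitioned into $t$ sets $D_1,\ldots,D_t$, each $D_i$ containing a special vertex $c_i$, such that each $D_i$ is independent with $|D_i|\le t$ and, for all $i\ne j$, $c_i$ has a neighbor in $D_j$. A b-$t$-atom is minimal if no proper induced subgraph of it is a b-$t$-atom. *)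

(* Defs.v *)
(* Finite simple graphs: a symmetric irreflexive relation e on a finType T. *)
From HB Require Import structures.
From mathcomp Require Import all_boot.
Set Implicit Arguments. Unset Strict Implicit. Unset Printing Implicit Defensive.

Section BColoring.
Variables (T : finType) (e : rel T).

(* A proper k-coloring: a surjective map c : V -> 'I_k (colors 0..k-1,
   standing for 1..k) with c u <> c v on every edge uv. *)
Definition proper_coloring (k : nat) (c : {ffun T -> 'I_k}) : bool :=
  [forall u, forall v, e u v ==> (c u != c v)] &&
  [forall i : 'I_k, exists v, c v == i].

Definition b_vertex (k : nat) (c : {ffun T -> 'I_k}) (v : T) : bool :=
  [forall j : 'I_k, (j != c v) ==> [exists u, e v u && (c u == j)]].

Definition b_coloring (k : nat) (c : {ffun T -> 'I_k}) : bool :=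
  proper_coloring c && [forall i : 'I_k, exists v, (c v == i) && b_vertex c v].

Definition has_b_coloring (k : nat) : bool :=
  [exists c : {ffun T -> 'I_k}, b_coloring c].

(* b-chromatic number: largest k admitting a b-k-coloring (any proper
   k-coloring is surjective, so k <= #|T|). *)
Definition b_chromatic : nat :=
  \max_(k < #|T|.+1 | has_b_coloring k) k.

Definition b_atom (t : nat) (S : {set T}) : Prop :=
  exists (D : 'I_t -> {set T}) (c : 'I_t -> T),
    [/\ (forall i j, i != j -> [disjoint D i & D j]),
        \bigcup_(i < t) D i = S,
        (forall i u v, u \in D i -> v \in D i -> ~~ e u v),
        (forall i, #|D i| <= t) &
        (forall i, c i \in D i) /\
        (forall i j, i != j -> exists v, v \in D j /\ e (c i) v)].

Definition minimal_b_atom (t : nat) (S : {set T}) : Prop :=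
  b_atom t S /\ (forall S' : {set T}, S' \proper S -> ~ b_atom t S').

End BColoring.

(* Main.v *)
Require Import Defs.
From mathcomp Require Import all_boot.
From Stdlib Require Import Classical.
From mathcomp Require Import zify.

Lemma atom_of_coloring (T : finType) (e : rel T) (t k : nat) (c : {ffun T -> 'I_k})
  (x0 : T) (tk : t <= k) : b_coloring e c -> exists S, b_atom e t S.
Proof.
case/andP=> /andP[/forallP Hpr _] /forallP Hb.
pose w (i : 'I_t) : 'I_k := widen_ord tk i.
have winj : forall i j, (w i == w j) = (i == j).
  by move=> i j; apply/eqP/eqP => [/(congr1 val) /= h|->]; [apply: val_inj|].
pose bv (i : 'I_t) := odflt x0 [pick v | (c v == w i) && b_vertex e c v].
have Hbv : forall i, (c (bv i) == w i) && b_vertex e c (bv i).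
  move=> i; rewrite /bv; case: pickP => [v -> //|H0].
  by move: (Hb (w i)) => /existsP[v]; rewrite H0.
pose nb (i j : 'I_t) := odflt x0 [pick u | e (bv i) u && (c u == w j)].
have Hnb : forall i j, i != j -> e (bv i) (nb i j) && (c (nb i j) == w j).
  move=> i j ij; rewrite /nb; case: pickP => [u -> //|H0].
  case/andP: (Hbv i) => /eqP ci /forallP /(_ (w j)).
  rewrite ci winj eq_sym ij /= => /existsP[u]; by rewrite H0.
pose D (j : 'I_t) := bv j |: [set nb i j | i in predC1 j].
have Dcol : forall j u, u \in D j -> c u == w j.
  move=> j u; rewrite in_setU1 => /orP[/eqP->|/imsetP[i]]; first by case/andP: (Hbv j).
  by rewrite inE => ij ->; case/andP: (Hnb i j ij).
exists (\bigcup_(i < t) D i), D, bv; split.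
- move=> i j ij; rewrite disjoint_subset; apply/subsetP=> u ui; rewrite inE.
  apply/negP=> uj; move: (Dcol _ _ ui) (Dcol _ _ uj) => /eqP-> /eqP /eqP.
  by rewrite winj (negbTE ij).
- by [].
- move=> i u v ui vi; apply/negP=> euv.
  move: (Hpr u) => /forallP /(_ v) /implyP /(_ euv).
  by rewrite (eqP (Dcol _ _ ui)) (eqP (Dcol _ _ vi)) eqxx.
- move=> j; rewrite /D cardsU1.
  have := leq_imset_card (fun i => nb i j) (predC1 j).
  rewrite cardC1 card_ord => h; have := ltn_ord j.
  move: (#|_|) h => m h; move: (nat_of_ord j) => jj jt.
  case: (bv j \notin _) => /=; lia.
- split; first by move=> i; rewrite setU11.
  move=> i j ij; exists (nb i j); split; last by case/andP: (Hnb i j ij).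
  by rewrite /D setU1r //; apply/imsetP; exists i; rewrite // inE eq_sym.
Qed.

Lemma minimal_exists (T : finType) (e : rel T) (t : nat) :
  forall n (S : {set T}), #|S| <= n -> b_atom e t S -> exists S', minimal_b_atom e t S'.
Proof.
elim=> [|n IH] S hS hA.
  exists S; split=> // S' /proper_card; rewrite ltnNge => /negP; case.
  by apply: (leq_trans hS).
destruct (classic (forall S' : {set T}, S' \proper S -> ~ b_atom e t S')) as [H|H].
  by exists S.
apply not_all_ex_not in H. destruct H as [S' H]. apply imply_to_and in H. destruct H as [pS' hA']. apply NNPP in hA'.
apply: (IH S') => //.
by rewrite -ltnS (leq_trans (proper_card pS')).
Qed.

Theorem mainTheorem6 (T : finType) (e : rel T)
    (e_sym : symmetric e) (e_irr : irreflexive e) (t : nat) :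
  0 < t -> t <= b_chromatic e ->
  exists S : {set T}, minimal_b_atom e t S.
Proof.
move=> t0 tb.
have [/existsP[k /andP[hk tk]]|] :=
  boolP [exists k : 'I_#|T|.+1, has_b_coloring e k && (t <= k)]; last first.
  move=> /existsPn H; exfalso; move: tb; rewrite /b_chromatic.
  have : \max_(k < #|T|.+1 | has_b_coloring e k) k <= t.-1.
    apply/bigmax_leqP => i hi; move: (H i); rewrite hi /= -ltnNge.
    by case: (t) t0.
  by case: (t) t0 => // n _ /= h1 h2; move: (leq_trans h2 h1); rewrite ltnn.
case/existsP: hk => c hc.
have [x0 _] : exists x0 : T, true.
  case/andP: hc => /andP[_ /forallP hs] _.
  have k0 : 0 < k by apply: leq_trans tk.
  by case/existsP: (hs (Ordinal k0)) => v _; exists v.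
have [S hS] := @atom_of_coloring T e t k c x0 tk hc.
exact: (@minimal_exists T e t #|S| S).
Qed.
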